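(* Let $(Q,* )$ and $(Q',\cdot)$ be automorphic loops and let $f:(Q,* )\to(Q',\cdot)$ be a half-isomorphism. If $(Q',\cdot)$ satisfies condition (C) (for all $a,b\in Q'$: $a\cdot(a\cdot b)=(b\cdot a)\cdot a$ if and only if $a\cdot b=b\cdot a$), then $(Q,* )$ also satisfies condition (C): for all $x,y\in Q$, $x*(x*y)=(y*x)*x$ if and only if $x*y=y*x$.
   Context: A loop is a set with a binary operation in which all equations $ax=b$, $ya=b$ are uniquely solvable and which has a two-sided identity. For $a\in L$, $R_a:x\mapsto xa$, $L_a:x\mapsto ax$; the inner mapping group is the stabilizer of the identity in the group generated by all $R_a,L_a$. A loop is automorphic if every inner mapping is an automorphism. A half-isomorphism between loops $(L,* )$, $(L',\cdot)$ is a bijection $f$ with $f(x*y)\in\{f(x)\cdot f(y),f(y)\cdot f(x)\}$ for all $x,y\in L$. *)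

(* Defs.v *)
(* Loops are possibly infinite: a loop is a type with a binary operation. *)

Section LoopDefs.
Variable T : Type.
Variable mul : T -> T -> T.

Definition is_identity (e : T) : Prop :=
  forall x, mul e x = x /\ mul x e = x.

Definition is_loop : Prop :=
  (forall a b, exists x, mul a x = b /\ forall x', mul a x' = b -> x' = x) /\
  (forall a b, exists y, mul y a = b /\ forall y', mul y' a = b -> y' = y) /\
  (exists e, is_identity e).

Definition Rmap (a : T) : T -> T := fun x => mul x a.
Definition Lmap (a : T) : T -> T := fun x => mul a x.

(* Mlt f : f belongs to the (multiplication) group of permutations of T
   generated by all R_a, L_a.  Functions are identified pointwise. *)
Inductive Mlt : (T -> T) -> Prop :=
  | Mlt_id : Mlt (fun x => x)
  | Mlt_R : forall a, Mlt (Rmap a)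
  | Mlt_L : forall a, Mlt (Lmap a)
  | Mlt_comp : forall f g, Mlt f -> Mlt g -> Mlt (fun x => f (g x))
  | Mlt_inv : forall f g, Mlt f ->
      (forall x, g (f x) = x) -> (forall x, f (g x) = x) -> Mlt g
  | Mlt_ext : forall f g, Mlt f -> (forall x, f x = g x) -> Mlt g.

Definition inner_mapping (e : T) (f : T -> T) : Prop := Mlt f /\ f e = e.

Definition is_hom (f : T -> T) : Prop := forall x y, f (mul x y) = mul (f x) (f y).

(* automorphic loop: every inner mapping is an automorphism
   (inner mappings are bijective, so being a homomorphism suffices) *)
Definition automorphic_loop : Prop :=
  is_loop /\
  forall e, is_identity e -> forall f, inner_mapping e f -> is_hom f.

Definition condC : Prop :=
  forall a b, mul a (mul a b) = mul (mul b a) a <-> mul a b = mul b a.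

End LoopDefs.

Definition half_isomorphism {T T' : Type} (mul : T -> T -> T) (mul' : T' -> T' -> T')
  (f : T -> T') : Prop :=
  (exists g : T' -> T, (forall x, g (f x) = x) /\ (forall y, f (g y) = y)) /\
  forall x y, f (mul x y) = mul' (f x) (f y) \/ f (mul x y) = mul' (f y) (f x).

(* Main.v *)
Require Import Defs.
From Stdlib Require Import IndefiniteDescription.

Section Aux.
Variable Q : Type.
Variable mul : Q -> Q -> Q.
Hypothesis HA : automorphic_loop Q mul.

Lemma lcanc : forall a p q, mul a p = mul a q -> p = q.
Proof.
  destruct HA as [[Hl _] _]. intros a p q E.
  destruct (Hl a (mul a q)) as [x [_ Hu]].
  rewrite (Hu p E), (Hu q eq_refl). reflexivity.
Qed.

Lemma rcanc : forall a p q, mul p a = mul q a -> p = q.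
Proof.
  destruct HA as [[_ [Hr _]] _]. intros a p q E.
  destruct (Hr a (mul q a)) as [x [_ Hu]].
  rewrite (Hu p E), (Hu q eq_refl). reflexivity.
Qed.

Lemma Hr_ex : forall a b, exists y, mul y a = b.
Proof. destruct HA as [[_ [Hr _]] _]. intros a b. destruct (Hr a b) as [y [Hy _]]. eauto. Qed.

Definition rdiv (a b : Q) : Q :=
  proj1_sig (constructive_indefinite_description _ (Hr_ex a b)).

Lemma rdiv_spec : forall a b, mul (rdiv a b) a = b.
Proof.
  intros a b. unfold rdiv.
  destruct (constructive_indefinite_description _ (Hr_ex a b)) as [y Hy]. exact Hy.
Qed.

Definition Tm (x : Q) : Q -> Q := fun z => rdiv x (Lmap Q mul x z).

Lemma Tm_spec : forall x z, mul (Tm x z) x = mul x z.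
Proof. intros. unfold Tm, Lmap. apply rdiv_spec. Qed.

Lemma Tm_hom : forall x, is_hom Q mul (Tm x).
Proof.
  intro x. destruct HA as [[_ [_ [e He]]] Haut].
  apply (Haut e He). split.
  - unfold Tm. apply (Mlt_comp Q mul (rdiv x) (Lmap Q mul x)).
    + apply (Mlt_inv Q mul (Rmap Q mul x)). apply Mlt_R.
      * intro z. apply (rcanc x). unfold Rmap. apply rdiv_spec.
      * intro z. unfold Rmap. apply rdiv_spec.
    + apply Mlt_L.
  - apply (rcanc x). rewrite Tm_spec. destruct (He x) as [H1 H2]. congruence.
Qed.

Lemma Tm_x : forall x, Tm x x = x.
Proof. intro x. apply (rcanc x). apply Tm_spec. Qed.

Lemma flex : forall x y, mul (mul x y) x = mul x (mul y x).
Proof.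
  intros x y. rewrite <- (Tm_spec x (mul y x)). rewrite Tm_hom, Tm_x, Tm_spec. reflexivity.
Qed.

Lemma xxy : forall x y, mul x (mul x y) = mul (mul x (Tm x y)) x.
Proof.
  intros x y. rewrite <- (Tm_spec x (mul x y)). rewrite Tm_hom, Tm_x. reflexivity.
Qed.

Lemma F2 : forall x y, mul x (mul x y) = mul (mul x y) x -> mul x y = mul y x.
Proof.
  intros x y E. rewrite xxy in E. apply rcanc in E. apply lcanc in E.
  rewrite <- E at 2. symmetry. apply Tm_spec.
Qed.

Lemma F3 : forall x y, mul x y = mul y x -> mul x (mul x y) = mul (mul y x) x.
Proof.
  intros x y E. rewrite xxy.
  assert (Tm x y = y) as ->. { apply (rcanc x). rewrite Tm_spec. exact E. }
  rewrite E. reflexivity.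
Qed.
End Aux.

Theorem proposition4p3 (Q Q' : Type) (mul : Q -> Q -> Q) (mul' : Q' -> Q' -> Q')
  (f : Q -> Q') :
  automorphic_loop Q mul -> automorphic_loop Q' mul' ->
  half_isomorphism mul mul' f ->
  condC Q' mul' -> condC Q mul.
Proof.
  intros HA HA' [[g [Hg1 Hg2]] Hf] HC x y. split; [|apply F3; exact HA].
  intro H.
  assert (inj : forall p q, f p = f q -> p = q).
  { intros p q E. rewrite <- (Hg1 p), <- (Hg1 q), E. reflexivity. }
  assert (Dab : mul' (f x) (f y) = mul' (f y) (f x) -> mul x y = mul y x).
  { intro E. apply inj. destruct (Hf x y) as [E1|E1]; destruct (Hf y x) as [E2|E2]; congruence. }
  assert (DC : mul' (f x) (mul' (f x) (f y)) = mul' (mul' (f y) (f x)) (f x) -> mul x y = mul y x).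
  { intro E. apply Dab. apply (proj1 (HC (f x) (f y))). exact E. }
  assert (Dm : f (mul (mul x y) x) = f (mul x (mul x y)) -> mul x y = mul y x).
  { intro E. apply F2; [exact HA|]. symmetry. apply inj. exact E. }
  assert (Dl : forall p q, mul' (f x) p = mul' (f x) q -> p = q) by (apply lcanc; exact HA').
  assert (Dr : forall p q, mul' p (f x) = mul' q (f x) -> p = q) by (intros; eapply rcanc; eauto).
  assert (Huv : f (mul x y) = f (mul y x) -> mul x y = mul y x) by apply inj.
  pose proof (Hf x (mul x y)) as W1. pose proof (Hf (mul y x) x) as W2.
  rewrite <- H in W2.
  pose proof (Hf (mul x y) x) as M1. pose proof (Hf x (mul y x)) as M2.
  rewrite <- (flex Q mul HA) in M2.
  pose proof (Hf x y) as U. pose proof (Hf y x) as V.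
  destruct U as [U|U]; destruct V as [V|V]; try (apply Huv; congruence);
  rewrite U in W1, M1; rewrite V in W2, M2;
  destruct W1 as [W1|W1]; destruct W2 as [W2|W2];
  destruct M1 as [M1|M1]; destruct M2 as [M2|M2];
  first [ apply Dm; congruence
        | apply DC; congruence
        | apply Dab; apply Dl; congruence
        | apply Dab; apply Dr; congruence
        | idtac ].
  all: fail.
Qed.
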